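(* Let $E$ be a finite graded atomic commutative monoid of idempotents with set of atoms $A$. Then $E$ has a monoid presentation with generators $a\in A$ and relations: $ab=ba$ for $a,b\in A$; and $a_1\cdots a_k=a_1\cdots a_kb$ for all $a_1,\ldots,a_k,b\in A$ with $1\le k\le\mathrm{rk}\,E$, $\{a_1,\dots,a_k\}$ independent and $b\le a_1\vee\cdots\vee a_k$.
   Context: A finite commutative monoid of idempotents $E$ is a join-semilattice with least element $\mathbf 0$ (the identity) and greatest element $\mathbf 1$ via $x\le y\iff xy=y$, with $xy=x\vee y$. It is graded if all saturated chains $\mathbf 0=x_0<\cdots<x_k=x$ have the same length $\mathrm{rk}(x)=k$, and $\mathrm{rk}\,E=\mathrm{rk}(\mathbf 1)$; atoms are the elements of rank $1$; $E$ is atomic if every element is a join of atoms. A set $S$ of atoms is independent if $\bigvee(S\setminus\{s\})<\bigvee S$ for every $s\in S$. *)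

(* Defs.v *)
From mathcomp Require Import all_boot.
Unset Printing Implicit Defensive.

Section CMI.
Variables (T : finType) (op : T -> T -> T) (e : T).

Definition is_cmi : Prop :=
  [/\ associative op, commutative op, idempotent_op op & left_id e op].

Definition le (x y : T) : bool := op x y == y.
Definition lt (x y : T) : bool := le x y && (x != y).
Definition covers (x y : T) : bool :=
  lt x y && [forall z, ~~ (lt x z && lt z y)].

(* saturated chain 0 = x_0 < x_1 < ... < x_k = x, encoded as the list
   [x_1; ...; x_k] (so its length is k) *)
Definition sat_chain (x : T) (s : seq T) : bool :=
  path covers e s && (last e s == x).

Definition is_rank (x : T) (k : nat) : Prop :=
  exists s, sat_chain x s /\ size s = k.

Definition graded : Prop :=
  forall x s1 s2, sat_chain x s1 -> sat_chain x s2 -> size s1 = size s2.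

Definition atom (a : T) : Prop := is_rank a 1.

Definition joinS (S : {set T}) : T := foldr op e (enum S).

Definition top : T := joinS [set: T].

Definition atomic : Prop :=
  forall x, exists S : {set T}, (forall a, a \in S -> atom a) /\ x = joinS S.

Definition independent (S : {set T}) : Prop :=
  forall s, s \in S -> lt (joinS (S :\ s)) (joinS S).

Definition gen := {a : T | atom a}.

Definition eval (w : seq gen) : T := foldr op e (map (@proj1_sig _ _) w).

Definition rel_comm (u v : seq gen) : Prop :=
  exists a b : gen, u = [:: a; b] /\ v = [:: b; a].

Definition rel_indep (u v : seq gen) : Prop :=
  exists (as_ : seq gen) (b : gen),
    1 <= size as_ /\
    (exists r, is_rank top r /\ size as_ <= r) /\
    independent [set x | x \in map (@proj1_sig _ _) as_] /\
    le (proj1_sig b) (eval as_) /\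
    u = as_ /\ v = rcons as_ b.

Definition relations (u v : seq gen) : Prop := rel_comm u v \/ rel_indep u v.

End CMI.

Inductive cong (G : Type) (R : seq G -> seq G -> Prop) : seq G -> seq G -> Prop :=
| cong_base u v : R u v -> cong G R u v
| cong_refl u : cong G R u u
| cong_sym u v : cong G R u v -> cong G R v u
| cong_trans u v w : cong G R u v -> cong G R v w -> cong G R u w
| cong_ctx p q u v : cong G R u v -> cong G R (p ++ u ++ q) (p ++ v ++ q).

Definition presentation (T : finType) (op : T -> T -> T) (e : T)
  (R : seq (gen T op e) -> seq (gen T op e) -> Prop) : Prop :=
  (forall x : T, exists w, eval T op e w = x) /\
  (forall u v, eval T op e u = eval T op e v <-> cong _ R u v).

(* Main.v *)
Require Import Defs.
From mathcomp Require Import all_boot.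
From Stdlib Require Import Classical.
Unset Printing Implicit Defensive.

Section Proof1.
Variables (T : finType) (op : T -> T -> T) (e : T).
Hypothesis Hc : is_cmi T op e.

Local Notation LE := (le T op).
Local Notation LT := (lt T op).
Local Notation G := (gen T op e).
Local Notation EV := (eval T op e).
Local Notation C := (cong G (relations T op e)).
Local Notation F := (foldr op e).

Let opA : associative op. Proof. by case: Hc. Qed.
Let opC : commutative op. Proof. by case: Hc. Qed.
Let opI : idempotent_op op. Proof. by case: Hc. Qed.
Let op1 : left_id e op. Proof. by case: Hc. Qed.

Lemma leP x y : LE x y <-> op x y = y.
Proof. by rewrite /le; split => [/eqP|->]. Qed.

Lemma le_refl x : LE x x.
Proof. by apply/leP; rewrite opI. Qed.

Lemma le_trans x y z : LE x y -> LE y z -> LE x z.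
Proof. move/leP=> h1 /leP h2; apply/leP; by rewrite -h2 opA h1. Qed.

Lemma le_anti x y : LE x y -> LE y x -> x = y.
Proof. move/leP=> h1 /leP h2; by rewrite -h1 opC h2. Qed.

Lemma le_opl x y : LE x (op x y).
Proof. by apply/leP; rewrite opA opI. Qed.

Lemma le_opr x y : LE y (op x y).
Proof. rewrite opC; exact: le_opl. Qed.

Lemma le_e x : LE e x.
Proof. by apply/leP; rewrite op1. Qed.

Lemma le_op x y z : LE x z -> LE y z -> LE (op x y) z.
Proof. move/leP=> h1 /leP h2; apply/leP; by rewrite -opA h2 h1. Qed.

Lemma F_mem l x : x \in l -> LE x (F l).
Proof.
elim: l => //= a l IH; rewrite in_cons => /orP [/eqP->|/IH h].
  exact: le_opl.
apply: le_trans h _; exact: le_opr.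
Qed.

Lemma F_ub l y : (forall x, x \in l -> LE x y) -> LE (F l) y.
Proof.
elim: l => [|a l IH] h /=; first exact: le_e.
apply: le_op; first by apply: h; rewrite mem_head.
by apply: IH => x hx; apply: h; rewrite in_cons hx orbT.
Qed.

Lemma F_cat l1 l2 : F (l1 ++ l2) = op (F l1) (F l2).
Proof. elim: l1 => [|a l IH] /=; first by rewrite op1. by rewrite IH opA. Qed.

Lemma EV_cat u v : EV (u ++ v) = op (EV u) (EV v).
Proof. by rewrite /eval map_cat F_cat. Qed.

Lemma joinS_mem (S : {set T}) x : x \in S -> LE x (joinS T op e S).
Proof. by move=> h; apply: F_mem; rewrite mem_enum. Qed.

Lemma joinS_ub (S : {set T}) y : (forall x, x \in S -> LE x y) -> LE (joinS T op e S) y.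
Proof. by move=> h; apply: F_ub => x; rewrite mem_enum; apply: h. Qed.

Lemma le_top x : LE x (top T op e).
Proof. by apply: joinS_mem; rewrite inE. Qed.

Lemma lt_trans x y z : LT x y -> LT y z -> LT x z.
Proof.
case/andP=> h1 n1 /andP [h2 n2]; apply/andP; split; first exact: le_trans h1 h2.
apply/eqP=> exz; subst z; move/eqP: n1; apply; exact: le_anti.
Qed.

Lemma cover_ex y n x : #|[set w | LT x w && LE w y]| <= n -> LT x y ->
  exists z, covers T op x z && LE z y.
Proof.
elim: n x y => [|n IH] x y hc hxy.
  have H : y \in [set w | LT x w && LE w y] by rewrite inE hxy le_refl.
  by rewrite leqn0 cards_eq0 in hc; rewrite (eqP hc) inE in H.
case hcov: (covers T op x y); first by exists y; rewrite hcov le_refl.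
move: hcov; rewrite /covers hxy /= => /negbT; rewrite negb_forall => /existsP [z].
rewrite negbK => /andP [hxz hzy].
have sub : [set w | LT x w && LE w z] \proper [set w | LT x w && LE w y].
  apply/properP; split.
    apply/subsetP => w; rewrite !inE => /andP [-> hw] /=.
    case/andP: hzy => hzy _; exact: le_trans hw hzy.
  exists y; first by rewrite inE hxy le_refl.
  rewrite inE; apply/negP => /andP [_ hyz].
  case/andP: hzy => hzy /eqP; apply; exact: le_anti.
have hz : #|[set w | LT x w && LE w z]| <= n by rewrite -ltnS; exact: leq_trans (proper_card sub) hc.
have [z' /andP [c1 c2]] := IH x z hz hxz.
exists z'; apply/andP; split; first exact: c1.
apply: le_trans c2 _; by case/andP: hzy.
Qed.


Lemma chain_ex y n x : #|[set w | LT x w && LE w y]| <= n -> LE x y ->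
  exists s, path (covers T op) x s && (last x s == y).
Proof.
elim: n x => [|n IH] x hc hxy.
  case: (eqVneq x y) => [->|nxy]; first by exists [::]; rewrite /= eqxx.
  have H : y \in [set w | LT x w && LE w y] by rewrite inE /lt hxy nxy le_refl.
  by rewrite leqn0 cards_eq0 in hc; rewrite (eqP hc) inE in H.
case: (eqVneq x y) => [->|nxy]; first by exists [::]; rewrite /= eqxx.
have hlt : LT x y by rewrite /lt hxy nxy.
have [z /andP [cz hzy]] := @cover_ex y _ x (leqnn _) hlt.
have hxz : LT x z by case/andP: cz.
have sub : [set w | LT z w && LE w y] \proper [set w | LT x w && LE w y].
  apply/properP; split.
    apply/subsetP => w; rewrite !inE => /andP [hw ->]; rewrite andbT.
    exact: lt_trans hxz hw.
  exists z; first by rewrite inE hxz hzy.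
  by rewrite inE /lt eqxx /= andbF.
have hz : #|[set w | LT z w && LE w y]| <= n by rewrite -ltnS; exact: leq_trans (proper_card sub) hc.
have [s /andP [p1 p2]] := IH z hz hzy.
by exists (z :: s); rewrite /= cz p1 p2.
Qed.

Lemma long_chain c x y : path LT x c -> LE (last x c) y ->
  exists s, [&& path (covers T op) x s, last x s == y & size c <= size s].
Proof.
elim: c x => [|z c IH] x /=.
  move=> _ hxy; have [s /andP [p1 p2]] := @chain_ex _ _ _ (leqnn _) hxy.
  by exists s; rewrite p1 p2.
case/andP=> hxz hp hl.
have [s2 /and3P [q1 q2 q3]] := IH z hp hl.
have [s1 /andP [p1 p2]] := @chain_ex _ _ _ (leqnn _) (proj1 (andP hxz)).
exists (s1 ++ s2); rewrite cat_path last_cat (eqP p2) p1 q1 q2 /= size_cat.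
case: s1 p1 p2 => [|a s1] _ p2 /=.
  by move: hxz; rewrite /lt /= in p2 *; rewrite (eqP p2) eqxx andbF.
by rewrite addSn ltnS (leq_trans q3) // leq_addl.
Qed.

Fixpoint chainof (x : T) (w : seq T) : seq T :=
  if w is a :: w' then op x a :: chainof (op x a) w' else [::].

Lemma size_chainof x w : size (chainof x w) = size w.
Proof. by elim: w x => //= a w IH x; rewrite IH. Qed.

Lemma path_chainof w x :
  (forall p a q, w = p ++ a :: q -> ~ LE a (op x (F (p ++ q)))) ->
  path LT x (chainof x w).
Proof.
elim: w x => //= a w IH x h.
apply/andP; split.
  apply/andP; split; first exact: le_opl.
  apply/eqP=> ex; apply: (h [::] a w) => //=.
  rewrite ex; apply: le_trans (le_opr _ _) (le_opl _ _).
apply: IH => p b q ew; have := h (a :: p) b q; rewrite ew /= => /(_ erefl).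
by rewrite opA.
Qed.


Lemma cbase u v : relations T op e u v -> C u v.
Proof. exact: cong_base. Qed.
Lemma crefl u : C u u.
Proof. exact: cong_refl. Qed.
Lemma csym u v : C u v -> C v u.
Proof. exact: cong_sym. Qed.
Lemma ctrans u v w : C u v -> C v w -> C u w.
Proof. exact: cong_trans. Qed.
Lemma cctx p q u v : C u v -> C (p ++ u ++ q) (p ++ v ++ q).
Proof. exact: cong_ctx. Qed.

Arguments cbase {u v}.
Arguments csym {u v}.
Arguments ctrans {u v w}.
Arguments cctx p q {u v}.

Lemma ctxl p u v : C u v -> C (p ++ u) (p ++ v).
Proof. move=> h; have := cctx p [::] h; by rewrite !cats0. Qed.

Lemma ctxr q u v : C u v -> C (u ++ q) (v ++ q).
Proof. move=> h; exact: (cctx [::] q h). Qed.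
Arguments ctxl p {u v}.
Arguments ctxr q {u v}.

Lemma move_end (a : G) w : C (a :: w) (w ++ [:: a]).
Proof.
elim: w => [|c w IH] /=; first exact: crefl.
apply: ctrans (ctxl [:: c] IH).
have h : C [:: a; c] [:: c; a] by apply: cbase; left; exists a, c.
exact: (cctx [::] w h).
Qed.

Lemma comm_words u v : C (u ++ v) (v ++ u).
Proof.
elim: u => [|a u IH] /=; first by rewrite cats0; exact: crefl.
apply: ctrans (move_end _ _) _.
apply: ctrans (ctxr [:: a] IH) _.
rewrite -catA; apply: ctxl; apply: csym; exact: move_end.
Qed.

Lemma move_mid p (c : G) q : C (p ++ c :: q) ((p ++ q) ++ [:: c]).
Proof. rewrite -catA; apply: ctxl; exact: move_end. Qed.

Lemma EV_cons (a : G) w : EV (a :: w) = op (proj1_sig a) (EV w).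
Proof. by []. Qed.

Lemma EV_absorb u (b : G) : LE (proj1_sig b) (EV u) -> EV (u ++ [:: b]) = EV u.
Proof. move/leP=> h; rewrite EV_cat /= /eval /= (opC _ e) op1 opC; exact: h. Qed.

Lemma sound u v : C u v -> EV u = EV v.
Proof.
elim=> {u v} [u v [[a [b [-> ->]]]|[as_ [b [_ [_ [_ [hb [-> ->]]]]]]]]|u|u v _ ->|u v w _ -> _ ->|p q u v _ h] //.
- by rewrite /eval /= opA (opC _ (proj1_sig b)) -opA.
- by rewrite -cats1 EV_absorb.
- by rewrite !EV_cat h.
Qed.

Lemma atom_ne (b : G) : ~ LE (proj1_sig b) e.
Proof.
case: b => b [[|z [|z' s]] [hs sz]] //= hle.
move: hs; rewrite /sat_chain /= andbT => /andP [/andP [/andP [_ hne] _] /eqP ez].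
subst z; move/leP: hle; rewrite opC op1 => hb.
by rewrite hb eqxx in hne.
Qed.

Lemma map_split (u : seq G) p' a' q' :
  map (@proj1_sig _ _) u = p' ++ a' :: q' ->
  exists p c q, [/\ u = p ++ c :: q, map (@proj1_sig _ _) (p ++ q) = p' ++ q' & proj1_sig c = a'].
Proof.
elim: p' u => [|x p' IH] [|c u] //= [e1 e2].
  by exists [::], c, u; subst.
have [p [c' [q [-> h2 h3]]]] := IH _ e2.
by exists (c :: p), c', q; rewrite /= h2 e1.
Qed.


Arguments map_split {u p' a' q'}.

Arguments long_chain {c x y}.

Lemma in_split (l : seq T) x : x \in l -> exists p q, l = p ++ x :: q.
Proof.
elim: l => // a l IH; rewrite in_cons => /orP [/eqP ->|/IH [p [q ->]]].
  by exists [::], l.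
by exists (a :: p), q.
Qed.

Lemma absorb n u (b : G) : size u <= n -> LE (proj1_sig b) (EV u) -> C u (u ++ [:: b]).
Proof.
elim: n u b => [|n IH] u b hs hb.
  by case: u hs hb => // _ hb; exfalso; apply: (atom_ne _ hb).
case: (classic (exists p c q, u = p ++ c :: q /\ LE (proj1_sig c) (EV (p ++ q)))).
  move=> [p [c [q [eu hc]]]].
  have hs' : size (p ++ q) <= n.
    by move: hs; rewrite eu !size_cat /= addnS ltnS.
  have ev : EV u = EV (p ++ q).
    rewrite EV_cat in hc; rewrite eu !EV_cat EV_cons opA (opC (EV p)) -opA.
    exact/leP.
  have h1 : C u (p ++ q).
    rewrite {1}eu; apply: ctrans (move_mid p c q) _; apply: csym; exact: IH.
  have hb' : LE (proj1_sig b) (EV (p ++ q)) by rewrite -ev.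
  eapply ctrans; first exact: h1.
  eapply ctrans; first exact: (IH _ b hs' hb').
  apply: csym; exact: (ctxr _ h1).
move=> nA.
have hne : 0 < size u by case: u hs hb nA => // _ hb _; exfalso; exact: (atom_ne _ hb).
apply: cbase; right; exists u, b; split; first by [].
split.
  set w := map (@proj1_sig _ _) u.
  have hp : path LT e (chainof e w).
    apply: path_chainof => p' a' q' ew; rewrite op1 => hle.
    have [p [c [q [eu h2 h3]]]] := map_split ew.
    by apply: nA; exists p, c, q; split => //; rewrite /eval h2 h3.
  have [s /and3P [s1 s2 s3]] := long_chain hp (le_top _).
  exists (size s); split; first by exists s; rewrite /sat_chain s1 s2.
  by move: s3; rewrite size_chainof size_map.
split.
  move=> x; rewrite inE => hx; apply/andP; split.
    by apply: joinS_ub => y; rewrite !inE => /andP [_ hy]; apply: joinS_mem; rewrite inE.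
  apply/eqP => heq.
  have [p' [q' ew]] := @in_split _ _ hx.
  have [p [c [q [eu h2 h3]]]] := map_split ew.
  apply: nA; exists p, c, q; split => //; rewrite h3.
  apply: (@le_trans _ (joinS T op e [set x0 | x0 \in map (@proj1_sig _ _) u])); first by apply: joinS_mem; rewrite inE.
  rewrite -heq; apply: joinS_ub => y; rewrite !inE => /andP [ny hy].
  apply: F_mem; move: hy; rewrite eu !map_cat /= h3 !mem_cat in_cons (negbTE ny) /=.
  by [].
split; first exact: hb.
by rewrite cats1.
Qed.


Lemma absorb_word v u : (forall x, x \in map (@proj1_sig _ _) v -> LE x (EV u)) -> C u (u ++ v).
Proof.
elim: v u => [|b v IH] u h; first by rewrite cats0; exact: crefl.
have hb : LE (proj1_sig b) (EV u) by apply: h; rewrite mem_head.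
eapply ctrans; first exact: (@absorb _ u b (leqnn _) hb).
have -> : u ++ b :: v = (u ++ [:: b]) ++ v by rewrite -catA.
apply: IH => x hx; rewrite EV_absorb //.
by apply: h; rewrite /= in_cons hx orbT.
Qed.

Lemma complete u v : EV u = EV v -> C u v.
Proof.
move=> h.
have h1 : C u (u ++ v) by apply: absorb_word => x hx; rewrite h; apply: F_mem.
have h2 : C v (v ++ u) by apply: absorb_word => x hx; rewrite -h; apply: F_mem.
exact: (ctrans h1 (ctrans (comm_words u v) (csym h2))).
Qed.

Lemma lift_atoms (l : seq T) : (forall a, a \in l -> atom T op e a) ->
  exists w : seq G, map (@proj1_sig _ _) w = l.
Proof.
elim: l => [|a l IH] h; first by exists [::].
have [w hw] : exists w : seq G, map (@proj1_sig _ _) w = l.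
  by apply: IH => x hx; apply: h; rewrite in_cons hx orbT.
have ha : atom T op e a by apply: h; rewrite mem_head.
by exists (exist _ a ha :: w); rewrite /= hw.
Qed.

Lemma main_pres : atomic T op e -> presentation T op e (relations T op e).
Proof.
move=> hat; split.
  move=> x; have [S [hS ->]] := hat x.
  have hl : forall a, a \in enum S -> atom T op e a by move=> a; rewrite mem_enum; apply: hS.
  have [w hw] := @lift_atoms (enum S) hl.
  by exists w; rewrite /eval hw.
move=> u v; split; [exact: complete | exact: sound].
Qed.

End Proof1.

Theorem proposition1 (T : finType) (op : T -> T -> T) (e : T) :
  is_cmi T op e -> graded T op e -> atomic T op e ->
  presentation T op e (relations T op e).
Proof. by move=> hc _ ha; exact: main_pres. Qed.
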